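(* Let $\overline{G}$ be the roommate diversity game with red agents $r_1,r_2,r_3$, blue agents $b_1,\dots,b_6$, room size $3$ and the trichotomous preferences described in the context. Then $\overline{G}$ has no popular outcome; in particular, a popular outcome is not guaranteed to exist in a roommate diversity game.
   Context: A roommate diversity game consists of disjoint finite sets $R$ (red agents) and $B$ (blue agents), a room size $s$ with $s$ dividing $|R\cup B|$, and for each agent a weak order over the fractions $\{j/s: 0\le j\le s\}$. An outcome is a partition of $R\cup B$ into rooms of size $s$; $\pi(a)$ is the room containing $a$ and $\theta(C)=|C\cap R|/|C|$. Agent $a$ prefers $\pi$ to $\pi'$ if it strictly prefers $\theta(\pi(a))$ to $\theta(\pi'(a))$; $N(\pi,\pi')$ is the set of agents preferring $\pi$ to $\pi'$, $\phi(\pi,\pi')=|N(\pi,\pi')|-|N(\pi',\pi)|$, and $\pi$ is popular if $\phi(\pi,\pi')\ge 0$ for every outcome $\pi'$. A trichotomous preference is given by a partition of the fractions into sets $D_a^+$ (approved), $D_a^n$ (neutral), $D_a^-$ (disapproved), possibly empty, with approved $\succ$ neutral $\succ$ disapproved and indifference within each set. In $\overline{G}$ ($s=3$): $r_1$: $D^+=\{1/3\}$, $D^-=\{2/3,1\}$; $r_2,r_3$: $D^+=\{2/3\}$, $D^-=\{1/3,1\}$; $b_1,\dots,b_4$: $D^+=\{1/3\}$, $D^n=\{2/3\}$, $D^-=\{0\}$; $b_5,b_6$: $D^+=\{0\}$, $D^-=\{1/3,2/3\}$ (a red agent is never in a room of fraction $0$, a blue agent never in one of fraction $1$). *)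

(* Defs.v *)
From mathcomp Require Import all_boot all_order all_algebra.
Set Implicit Arguments. Unset Strict Implicit. Unset Printing Implicit Defensive.
Import Order.TTheory GRing.Theory Num.Theory.

Section Game.
Variable Agent : finType.

(* A roommate diversity game: red agents [red] (blue = complement), room size
   [s], and for every agent a weak order over fractions, represented by a
   utility (rank) function [pref a : rat -> nat] (higher = better). *)

Definition is_outcome (s : nat) (P : {set {set Agent}}) : Prop :=
  partition P [set: Agent] /\ forall C, C \in P -> #|C| = s.

Definition theta (red : {set Agent}) (C : {set Agent}) : rat :=
  (#|C :&: red|%:R / #|C|%:R)%R.

Definition prefers (red : {set Agent}) (pref : Agent -> rat -> nat)
  (P P' : {set {set Agent}}) (a : Agent) : bool :=
  pref a (theta red (pblock P' a)) < pref a (theta red (pblock P a)).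

Definition Nset red pref (P P' : {set {set Agent}}) : {set Agent} :=
  [set a | prefers red pref P P' a].

Definition phi red pref (P P' : {set {set Agent}}) : int :=
  (#|Nset red pref P P'|%:Z - #|Nset red pref P' P|%:Z)%R.

Definition popular red s pref (P : {set {set Agent}}) : Prop :=
  is_outcome s P /\
  forall P', is_outcome s P' -> (0 <= phi red pref P P')%R.
End Game.

Definition trich (Dplus Dminus : seq rat) (x : rat) : nat :=
  if x \in Dplus then 2 else if x \in Dminus then 0 else 1.

(* The game G-bar: agents 'I_9; indices 0,1,2 are r1,r2,r3; 3..8 are b1..b6. *)
Definition Gbar_red : {set 'I_9} := [set i : 'I_9 | (i < 3)%N].

Definition third : rat := (1 / 3)%R.
Definition twothirds : rat := (2 / 3)%R.

Definition Gbar_pref (a : 'I_9) : rat -> nat :=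
  match nat_of_ord a with
  | 0 => trich [:: third] [:: twothirds; 1%R]
  | 1 | 2 => trich [:: twothirds] [:: third; 1%R]
  | 3 | 4 | 5 | 6 => trich [:: third] [:: 0%R]
  | _ => trich [:: 0%R] [:: third; twothirds]
  end.

(* Main.v *)
Require Import Defs.
From mathcomp Require Import all_boot all_order all_algebra.
Set Implicit Arguments. Unset Strict Implicit. Unset Printing Implicit Defensive.

Definition G (i k : nat) : nat :=
  match i with
  | 0 => nth 0 [:: 1; 2; 0; 0] k
  | 1 | 2 => nth 0 [:: 1; 0; 2; 0] k
  | 3 | 4 | 5 | 6 => nth 0 [:: 0; 2; 1; 1] k
  | _ => nth 0 [:: 2; 0; 0; 1] k
  end.

Fixpoint vecs n : seq (seq nat) :=
  if n is n'.+1 then [seq x :: t | x <- iota 0 4, t <- vecs n'] else [:: [::]].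

Lemma vecsP l : all (fun x => x < 4) l -> l \in vecs (size l).
Proof.
elim: l => [|x t IH] // /andP[hx ht].
have hx' : x \in iota 0 4 by rewrite mem_iota.
exact: (allpairs_f (fun (y:nat) (u:seq nat) => y :: u) hx' (IH ht)).
Qed.

Definition cnt j l := count (fun i => nth 0 l i == j) (iota 0 9).
Definition rcnt j l := count (fun i => (i < 3) && (nth 0 l i == j)) (iota 0 9).
Definition cond l := all (fun j => (cnt j l %% 3 == 0) && (3 * rcnt j l == j * cnt j l)) (iota 0 4).

Definition vecf (fl : seq nat) : seq nat :=
  mkseq (fun a => count (fun b => (nth 0 fl b == nth 0 fl a) && (b < 3)) (iota 0 9)) 9.

Definition cands : seq (seq nat) :=
 [:: [:: 0; 1; 1; 0; 0; 1; 2; 2; 2]; [:: 0; 1; 1; 0; 0; 2; 1; 2; 2];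
     [:: 0; 1; 1; 0; 1; 0; 2; 2; 2]; [:: 0; 1; 1; 1; 0; 0; 2; 2; 2];
     [:: 0; 1; 1; 0; 1; 2; 0; 2; 2]; [:: 0; 1; 1; 0; 2; 0; 1; 2; 2];
     [:: 0; 1; 1; 0; 2; 1; 0; 2; 2]; [:: 0; 1; 1; 1; 0; 2; 0; 2; 2]].

Definition beats (l fl : seq nat) :=
  count (fun i => G i (nth 0 (vecf fl) i) < G i (nth 0 l i)) (iota 0 9) <
  count (fun i => G i (nth 0 l i) < G i (nth 0 (vecf fl) i)) (iota 0 9).

Definition win l := has (beats l) cands.

Lemma check : all (fun l => if cond l then win l else true) (vecs 9).
Proof. vm_compute. reflexivity. Qed.

Lemma cands_ok : all (fun fl => all (fun a => count (fun b => nth 0 fl b == nth 0 fl a) (iota 0 9) == 3) (iota 0 9)) cands.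
Proof. by []. Qed.

Lemma G_ok i k : i < 9 -> k < 4 -> Gbar_pref (inord i) (k%:R / 3%:R) = G i k.
Proof.
move=> hi hk; rewrite /Gbar_pref inordK //.
by case: i hi => [|[|[|[|[|[|[|[|[|i]]]]]]]]] // _; case: k hk => [|[|[|[|k]]]].
Qed.

Lemma card_cnt (A : {set 'I_9}) : #|A| = count (fun i => inord i \in A) (iota 0 9).
Proof.
rewrite cardE /enum_mem size_filter -enumT -val_enum_ord count_map.
by apply: eq_count => x /=; rewrite inord_val.
Qed.

Lemma prefG (C : {set 'I_9}) i : #|C| = 3 -> i < 9 ->
  Gbar_pref (inord i) (theta Gbar_red C) = G i #|C :&: Gbar_red|.
Proof.
move=> hC hi; rewrite /theta hC G_ok //.
by rewrite ltnS; apply: leq_trans (eq_leq hC); apply: subset_leq_card; apply: subsetIl.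
Qed.

Definition blk (fl : seq nat) (a : 'I_9) := [set b : 'I_9 | nth 0 fl b == nth 0 fl a].
Definition Q fl := [set blk fl a | a : 'I_9].

Lemma Q_triv fl : trivIset (Q fl).
Proof.
apply/trivIsetP => A B /imsetP[a _ ->] /imsetP[b _ ->] neq.
apply/pred0P => x /=; apply/negbTE; apply/andP => -[]; rewrite !inE => /eqP h1 /eqP h2.
move/eqP: neq; apply; apply/setP => y; rewrite !inE -h1 h2.
done.
Qed.

Lemma Q_pblock fl a : pblock (Q fl) a = blk fl a.
Proof. by apply: def_pblock; [apply: Q_triv | apply: imset_f | rewrite inE]. Qed.

Lemma Q_outcome fl : all (fun a => count (fun b => nth 0 fl b == nth 0 fl a) (iota 0 9) == 3) (iota 0 9) ->
  is_outcome 3 (Q fl).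
Proof.
move=> hall; split.
  apply/and3P; split; last 2 first.
  - exact: Q_triv.
  - apply/imsetP => -[a _ h]; have : a \in blk fl a by rewrite inE.
    by rewrite -h inE.
  apply/eqP/setP => x; rewrite inE; apply/bigcupP; exists (blk fl x).
    exact: imset_f.
  by rewrite inE.
move=> C /imsetP[a _ ->]; rewrite card_cnt.
have ha : (a : nat) \in iota 0 9 by rewrite mem_iota ltn_ord.
rewrite -[RHS](eqP (allP hall _ ha)); apply: eq_in_count => i; rewrite mem_iota => /andP[_ hi].
by rewrite inE inordK.
Qed.

Section Out.
Variable P : {set {set 'I_9}}.
Hypothesis hP : is_outcome 3 P.

Let v (a : 'I_9) := #|pblock P a :&: Gbar_red|.

Lemma P_triv : trivIset P.
Proof. by case: hP => /and3P[]. Qed.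

Lemma P_mem a : pblock P a \in P.
Proof. by apply: pblock_mem; case: hP => /cover_partition -> _; rewrite inE. Qed.

Lemma P_card a : #|pblock P a| = 3.
Proof. by case: hP => _ ->; last exact: P_mem. Qed.

Lemma P_sum j (K : {set 'I_9}) :
  #|[set a | v a == j] :&: K| =
  \sum_(A in P) (if #|A :&: Gbar_red| == j then #|A :&: K| else 0).
Proof.
rewrite -sum1_card.
rewrite (eq_bigl (fun x => (x \in [set: 'I_9]) && ((v x == j) && (x \in K)))); last first.
  by move=> x; rewrite !inE.
rewrite (set_partition_big_cond _ (hP.1)) /=.
apply: eq_bigr => A PA.
rewrite (eq_bigl (fun x => (x \in A) && ((#|A :&: Gbar_red| == j) && (x \in K)))); last first.
  move=> x; case xA: (x \in A) => //=.
  by rewrite /v (def_pblock P_triv PA xA).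
case: (#|A :&: Gbar_red| == j) => /=; last by rewrite big_pred0 // => x; rewrite andbF.
rewrite sum1_card; apply: eq_card => x; by rewrite !inE.
Qed.
End Out.

Import Order.TTheory GRing.Theory Num.Theory.

Lemma Nset_cnt (P1 P2 : {set {set 'I_9}}) (l1 l2 : seq nat) :
  (forall a : 'I_9, #|pblock P1 a| = 3) -> (forall a : 'I_9, #|pblock P2 a| = 3) ->
  (forall i, i < 9 -> #|pblock P1 (inord i) :&: Gbar_red| = nth 0 l1 i) ->
  (forall i, i < 9 -> #|pblock P2 (inord i) :&: Gbar_red| = nth 0 l2 i) ->
  #|Nset Gbar_red Gbar_pref P1 P2| =
  count (fun i => G i (nth 0 l2 i) < G i (nth 0 l1 i)) (iota 0 9).
Proof.
move=> c1 c2 e1 e2; rewrite card_cnt; apply: eq_in_count => i.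
rewrite mem_iota => /andP[_ hi].
by rewrite inE /prefers !prefG // e1 // e2.
Qed.

Theorem mainTheorem10 :
  ~ exists P : {set {set 'I_9}}, popular Gbar_red 3 Gbar_pref P.
Proof.
move=> [P [hP hpop]].
pose v (a : 'I_9) := #|pblock P a :&: Gbar_red|.
pose l := mkseq (fun i => v (inord i)) 9.
have el i : i < 9 -> v (inord i) = nth 0 l i by move=> hi; rewrite nth_mkseq.
have hl : l \in vecs 9.
  have <- : size l = 9 by rewrite size_mkseq.
  apply: vecsP; apply/allP => x /mapP[i _ ->].
  rewrite ltnS /v; apply: leq_trans (eq_leq (P_card hP (inord i))); apply: subset_leq_card; apply: subsetIl.
have hc : cond l.
  apply/allP => j _.
  have ec : cnt j l = #|[set a | v a == j] :&: [set: 'I_9]|.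
    rewrite card_cnt; apply: eq_in_count => i; rewrite mem_iota => /andP[_ hi].
    by rewrite !inE andbT el.
  have er : rcnt j l = #|[set a | v a == j] :&: Gbar_red|.
    rewrite card_cnt; apply: eq_in_count => i; rewrite mem_iota => /andP[_ hi].
    by rewrite !inE el // inordK // andbC.
  rewrite ec er !(P_sum hP); apply/andP; split.
    apply: dvdn_sum => A PA; case: ifP => // _.
    by rewrite setIT (proj2 hP A PA).
  rewrite !big_distrr /=; apply/eqP; apply: eq_bigr => A PA.
  case: ifP => [/eqP ->|_]; last by rewrite !muln0.
  by rewrite setIT (proj2 hP A PA) mulnC.
have := allP check l hl; rewrite hc => /hasP[fl hfl hb].
have Qo := Q_outcome (allP cands_ok fl hfl).
have := hpop _ Qo; rewrite /phi subr_ge0 lez_nat.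
have cQ a : #|pblock (Q fl) a| = 3 by rewrite (proj2 Qo) //; apply: pblock_mem; rewrite (cover_partition (proj1 Qo)) inE.
have eQ i : i < 9 -> #|pblock (Q fl) (inord i) :&: Gbar_red| = nth 0 (vecf fl) i.
  move=> hi; rewrite Q_pblock nth_mkseq // card_cnt; apply: eq_in_count => b.
  by rewrite mem_iota => /andP[_ hb']; rewrite !inE !inordK.
rewrite (Nset_cnt (P_card hP) cQ (fun i hi => el i hi) eQ).
rewrite (Nset_cnt cQ (P_card hP) eQ (fun i hi => el i hi)).
by rewrite leqNgt; move: hb; rewrite /beats => ->.
Qed.
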